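(* Let $P$ be a transition kernel on $\mathbb{R}^d$. Suppose there is a constant $K<\infty$ such that for every $x\in\mathbb{R}^d$ and $Y_x\sim P(x,\cdot)$ there exists a random variable $W_x$ with $\mathbb{E}\|W_x\|\le K$ and $\|Y_x\|\le\|x\|+\|W_x\|$ almost surely. Assume moreover that there exist $R>0$, $\ell\in(0,1]$ and $\widetilde\ell\in[0,1)$ such that for every $x$ with $\|x\|>R$ there is a Borel set $D_x\subseteq\mathbb{R}^d$ with (a) $P(x,D_x)\ge\ell$, and (b) $\sup_{y\in D_x}\|y\|\le\widetilde\ell\|x\|$. Then $V(x):=\|x\|$ is a Lyapunov function for $P$ with $L:=R+K$ and $\delta:=1-(1-\widetilde\ell)\ell<1$, i.e. $\int V(y)\,P(x,\mathrm{d}y)\le\delta V(x)+L$ for all $x\in\mathbb{R}^d$.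
   Context: $\|\cdot\|$ denotes the Euclidean norm on $\mathbb{R}^d$. A function $V\colon\mathbb{R}^d\to[0,\infty)$ is a Lyapunov function of a transition kernel $P$ with $\delta\in[0,1)$ and $L\in[0,\infty)$ if $\int_{\mathbb{R}^d}V(y)P(x,\mathrm{d}y)\le\delta V(x)+L$ for all $x\in\mathbb{R}^d$. *)

(* Defs.v *)
From HB Require Import structures.
From mathcomp Require Import all_boot all_order all_algebra.
From mathcomp Require Import all_classical all_reals all_analysis.
Set Implicit Arguments. Unset Strict Implicit. Unset Printing Implicit Defensive.
Import Order.TTheory GRing.Theory Num.Theory.
Import numFieldNormedType.Exports.
Local Open Scope classical_set_scope.
Local Open Scope ring_scope.

(* R^d, as row vectors, equipped with its Borel sigma-algebra (generated by the
   open sets of the product topology, which is the Euclidean topology). *)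
Definition Rd (R : realType) (d : nat) : Type :=
  g_sigma_algebraType (@open 'rV[R]_d).

Definition enorm (R : realType) (d : nat) (x : 'rV[R]_d) : R :=
  Num.sqrt (\sum_(i < d) x ord0 i ^+ 2).

Definition lyapunov (R : realType) (d : nat) (P : R.-pker (Rd R d) ~> (Rd R d))
  (V : Rd R d -> R) (delta L : R) : Prop :=
  [/\ (forall x, 0 <= V x), 0 <= delta, delta < 1, 0 <= L &
   forall x : Rd R d,
     (\int[P x]_y (V y)%:E <= (delta * V x + L)%:E)%E].

(* Main.v *)
Require Import Defs.
From HB Require Import structures.
From mathcomp Require Import all_boot all_order all_algebra.
From mathcomp Require Import all_classical all_reals all_analysis.
From mathcomp Require Import measurable_realfun.
From mathcomp Require Import ring lra.
Import Order.TTheory GRing.Theory Num.Theory.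
Import numFieldNormedType.Exports.
Local Open Scope classical_set_scope.
Local Open Scope ring_scope.
Lemma enorm_cont (R : realType) d : continuous (@enorm R d).
Proof.
move=> x; apply: continuous_comp; last exact: sqrt_continuous.
apply: (continuous_big (op := +%R) (x0 := 0)) => //.
  exact: add_continuous.
move=> i _ y; rewrite /=.
apply: continuousM; exact: coord_continuous.
Qed.

Lemma cont_meas (R : realType) d (f : 'rV[R]_d -> R) : continuous f ->
  @measurable_fun _ _ (Rd R d) R setT f.
Proof.
move=> cf; apply: (measurability _ (measurable_realfun.RGenOpens.measurableE R)).
move=> _ [_ [a [b ->] <-]]; rewrite setTI.
apply: sub_sigma_algebra. move/continuousP: cf; apply. exact: interval_open.
Qed.

Lemma enorm_meas (R : realType) d : @measurable_fun _ _ (Rd R d) R setT (@enorm R d).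
Proof. exact: (@cont_meas R d _ (@enorm_cont R d)). Qed.

Lemma enorm_ge0 (R : realType) d (x : 'rV[R]_d) : 0 <= enorm x.
Proof. exact: sqrtr_ge0. Qed.

Section helpers.
Local Open Scope ereal_scope.

Lemma key (R : realType) (d : nat) dO (O : measurableType dO)
  (Pr : probability O R) (Y W : O -> Rd R d) (x : Rd R d) (K ellt : R) :
  measurable_fun setT Y -> measurable_fun setT W ->
  \int[Pr]_w (enorm (W w))%:E <= K%:E ->
  {ae Pr, forall w, (enorm (Y w) <= enorm x + enorm (W w))%R} ->
  (0 <= ellt <= 1)%R ->
  forall D : set (Rd R d), measurable D ->
  (forall y, D y -> enorm y <= ellt * enorm x)%R ->
  \int[Pr]_w (enorm (Y w))%:E + ((1 - ellt) * enorm x)%:E * Pr (Y @^-1` D)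
    <= (enorm x + K)%:E.
Proof.
move=> mY mW hWK hae /andP[e0 e1] D mD hDb.
have mYD : measurable (Y @^-1` D) by rewrite -[_ @^-1` _]setTI; exact: mY.
have mnY : measurable_fun setT (fun w => enorm (Y w)).
  exact: measurableT_comp (@enorm_meas R d) mY.
have mnW : measurable_fun setT (fun w => enorm (W w)).
  exact: measurableT_comp (@enorm_meas R d) mW.
have c0 : (0 <= (1 - ellt) * enorm x)%R.
  by apply: mulr_ge0; [rewrite subr_ge0|exact: enorm_ge0].
have -> : Pr (Y @^-1` D) = \int[Pr]_w (\1_(Y @^-1` D) w)%:E.
  by rewrite integral_indic // setIT.
have mI : @measurable_fun _ _ O (\bar R) setT (fun w => (\1_(Y @^-1` D) w : R)%:E).
  exact/measurable_EFinP/measurable_indic.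
rewrite -(@ge0_integralZl _ _ _ Pr setT measurableT _ mI); last 2 first.
- by move=> w _; rewrite lee_fin.
- by rewrite lee_fin.
rewrite -ge0_integralD //; last first.
- apply: emeasurable_funM => //; exact/measurable_EFinP/measurable_indic.
- by move=> w _; apply: mule_ge0; rewrite lee_fin.
- exact/measurable_EFinP.
- by move=> w _; rewrite lee_fin enorm_ge0.
apply: le_trans (_ : \int[Pr]_w (enorm x + enorm (W w))%:E <= _).
  apply: ae_ge0_le_integral => //.
  - by move=> w _; apply: adde_ge0; [rewrite lee_fin enorm_ge0|apply: mule_ge0; rewrite lee_fin].
  - apply: emeasurable_funD; first exact/measurable_EFinP.
    apply: emeasurable_funM => //; exact/measurable_EFinP/measurable_indic.
  - by move=> w _; rewrite lee_fin addr_ge0 ?enorm_ge0.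
  - apply/measurable_EFinP; apply: measurable_funD => //; exact: measurable_cst.
  apply: filterS hae => w hw _.
  rewrite -EFinM -EFinD lee_fin indicE.
  have [/[!inE] hD|hD] := boolP (w \in Y @^-1` D).
    rewrite mulr1; have := hDb _ hD.
    have := @enorm_ge0 R d (W w); lra.
  rewrite mulr0 addr0 //.
under eq_integral do rewrite EFinD.
rewrite (@ge0_integralD _ _ _ Pr setT measurableT (fun _ => (enorm x)%:E) (fun w => (enorm (W w))%:E)) //; last first.
all: try (by move=> w _; rewrite lee_fin enorm_ge0).
all: try exact/measurable_EFinP.
rewrite integral_cst //. rewrite [X in _ * X](_ : _ = 1) ?mule1; last exact: probability_setT.
rewrite EFinD.
by apply: leeD.
Qed.

Lemma fin_step (R : realType) (I : \bar R) (a b : R) : I + a%:E <= b%:E -> I <= (b - a)%:E.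
Proof.
case: I => [r| |] //=.
- by rewrite -EFinD !lee_fin; lra.
- by move=> _; rewrite leNye.

Qed.

End helpers.

Theorem proposition2 (R : realType) (d : nat)
  (P : R.-pker (Rd R d) ~> (Rd R d)) (K : R)
  (hW : forall x : Rd R d,
     exists (dO : measure_display) (O : measurableType dO)
            (Pr : probability O R) (Y W : O -> Rd R d),
       [/\ measurable_fun setT Y, measurable_fun setT W,
           (forall A : set (Rd R d), measurable A -> Pr (Y @^-1` A) = P x A),
           (\int[Pr]_w (enorm (W w))%:E <= K%:E)%E &
           {ae Pr, forall w, enorm (Y w) <= enorm x + enorm (W w)}])
  (R0 ell ellt : R) (hR0 : 0 < R0)
  (hell : 0 < ell <= 1) (hellt : 0 <= ellt < 1)
  (hD : forall x : Rd R d, R0 < enorm x ->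
     exists D : set (Rd R d),
       [/\ measurable D, (ell%:E <= P x D)%E &
           (forall y, D y -> enorm y <= ellt * enorm x)]) :
  lyapunov P (@enorm R d) (1 - (1 - ellt) * ell) (R0 + K).
Proof.
have [ell0 ell1] := andP hell; have [ellt0 ellt1] := andP hellt.
have hellt' : (0 <= ellt <= 1)%R by rewrite ellt0 ltW.
have K0 : (0 <= K)%R.
  have [dO [Om [Pr [Y [W [_ _ _ hWK _]]]]]] := hW (0 : 'rV[R]_d).
  rewrite -lee_fin; apply: le_trans hWK; apply: integral_ge0 => w _.
  by rewrite lee_fin enorm_ge0.
split.
- by move=> y; exact: enorm_ge0.
- by nra.
- by nra.
- by lra.
move=> x.
have [dO [Om [Pr [Y [W [mY mW hYP hWK hae]]]]]] := hW x.
have -> : (\int[P x]_y (enorm y)%:E = \int[Pr]_w (enorm (Y w))%:E)%E.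
  rewrite (eq_measure_integral (pushforward Pr Y)); last first.
    by move=> A mA _; exact: (esym (hYP A mA)).
  rewrite ge0_integral_pushforward //.
  - apply/measurable_EFinP; exact: (@enorm_meas R d).
  - by move=> y _; rewrite lee_fin enorm_ge0.
have nx0 := @enorm_ge0 R d x.
have [hx|hx] := leP (enorm x) R0.
  have := @key R d _ _ Pr Y W x K ellt mY mW hWK hae hellt' set0 measurable0 (fun y (h : set0 y) => False_ind _ h).
  rewrite preimage_set0 measure0 mule0 => /(fin_step) h.
  apply: le_trans h _; rewrite lee_fin.
  have h1 : (1 - ellt) * ell <= 1 by nra.
  have h3 : (1 - ellt) * ell * enorm x <= enorm x by nra.
  nra.
have [D [mD PD hDb]] := hD x hx.
have := @key R d _ _ Pr Y W x K ellt mY mW hWK hae hellt' D mD hDb.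
rewrite hYP // => h.
have h2 : (\int[Pr]_w (enorm (Y w))%:E + ((1 - ellt) * enorm x * ell)%:E <= (enorm x + K)%:E)%E.
  apply: le_trans h; apply: leeD2l; rewrite EFinM; apply: lee_wpmul2l => //.
  by rewrite lee_fin; nra.
apply: le_trans (@fin_step _ _ _ _ h2) _; rewrite lee_fin; nra.
Qed.
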